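(* Let $f_1,f_2\in\mathbb{R}[x_1,\ldots,x_n]$ be homogeneous cubic polynomials, each irreducible in $\mathbb{R}[x_1,\ldots,x_n]$. Then $f_1$ and $f_2$ are congruent if and only if the cones $\mathcal{F}(f_1)$ and $\mathcal{F}(f_2)$ are congruent.
   Context: For a polynomial $f$, $\mathcal{F}(f):=f^{-1}(0)\subset\mathbb{R}^n$. Two homogeneous polynomials $f_1,f_2$ on $\mathbb{R}^n$ are called congruent if there exist an orthogonal linear map $U$ of $\mathbb{R}^n$ and a real constant $c\neq 0$ such that $f_1(x)=c\,f_2(Ux)$ for all $x$. Two cones (subsets) $\mathcal{F}_1,\mathcal{F}_2\subset\mathbb{R}^n$ are congruent if $\mathcal{F}_2=U\mathcal{F}_1$ for some orthogonal linear map $U$ of $\mathbb{R}^n$. *)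

(* Defs.v *)
From HB Require Import structures.
From mathcomp Require Import all_boot all_order all_algebra.
From mathcomp Require Import reals.
From mathcomp Require Import mpoly.
Set Implicit Arguments. Unset Strict Implicit. Unset Printing Implicit Defensive.
Import Order.TTheory GRing.Theory Num.Theory.
Local Open Scope ring_scope.

Definition irreducible_mpoly (R : realType) (n : nat) (f : {mpoly R[n]}) : Prop :=
  [/\ f != 0, f \isn't a GRing.unit &
      forall g h : {mpoly R[n]}, f = g * h -> g \is a GRing.unit \/ h \is a GRing.unit].

Definition evalv (R : realType) (n : nat) (f : {mpoly R[n]}) (x : 'cV[R]_n) : R :=
  f.@[fun i => x i 0].

Definition orthogonal_mx (R : realType) (n : nat) (U : 'M[R]_n) : Prop :=
  U *m U^T = 1%:M.

Definition zero_cone (R : realType) (n : nat) (f : {mpoly R[n]}) : 'cV[R]_n -> Prop :=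
  fun x => evalv f x = 0.

Definition congruent_poly (R : realType) (n : nat) (f1 f2 : {mpoly R[n]}) : Prop :=
  exists (U : 'M[R]_n) (c : R), [/\ orthogonal_mx U, c != 0 &
    forall x : 'cV[R]_n, evalv f1 x = c * evalv f2 (U *m x)].

Definition congruent_cone (R : realType) (n : nat) (F1 F2 : 'cV[R]_n -> Prop) : Prop :=
  exists U : 'M[R]_n, orthogonal_mx U /\
    forall y : 'cV[R]_n, F2 y <-> exists x, F1 x /\ y = U *m x.

(* Main.v *)
Require Import Defs.
From Stdlib Require Import FunctionalExtensionality Classical.
From HB Require Import structures.
From mathcomp Require Import all_boot all_order all_algebra.
From mathcomp Require Import reals.
From mathcomp Require Import mpoly.
From mathcomp Require Import polyrcf.
From mathcomp Require Import ring lra zify.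
Set Implicit Arguments. Unset Strict Implicit. Unset Printing Implicit Defensive.
Import Order.TTheory GRing.Theory Num.Theory.
Local Open Scope ring_scope.
Section S.
Variable R : realType.
Variable n : nat.
Implicit Types (f g p q : {mpoly R[n]}) (a w x y : 'I_n -> R).

Lemma alg_ind (P : {mpoly R[n]} -> Prop) :
  (forall c, P c%:MP) -> (forall i, P 'X_i) ->
  (forall p q, P p -> P q -> P (p + q)) ->
  (forall p q, P p -> P q -> P (p * q)) -> forall p, P p.
Proof.
move=> PC PX PD PM; apply: mpolyind.
  by have := PC 0; rewrite mpolyC0.
move=> c m p _ _ Pp; apply: (PD) => //.
rewrite -mul_mpolyC; apply: (PM) => //.
rewrite mpolyXE_id; apply: (big_ind P); [by have := PC 1 | exact: (PM) |].
move=> i _; have H k : P ('X_i ^+ k).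
  elim: k => [|k IH]; first by have := PC 1; rewrite expr0.
  by rewrite exprS; apply: (PM).
exact: H.
Qed.

Definition lp f a w : {poly R} :=
  mmap (@polyC R) (fun i => (a i)%:P + w i *: 'X) f.

Lemma lpD f g a w : lp (f + g) a w = lp f a w + lp g a w.
Proof. exact: rmorphD. Qed.
Lemma lpM f g a w : lp (f * g) a w = lp f a w * lp g a w.
Proof. exact: rmorphM. Qed.
Lemma lpC c a w : lp c%:MP a w = c%:P.
Proof. exact: mmapC. Qed.
Lemma lpX i a w : lp 'X_i a w = (a i)%:P + w i *: 'X.
Proof. by rewrite /lp mmapX mmap1U. Qed.

Lemma lpE f a w t : (lp f a w).[t] = f.@[fun i => a i + t * w i].
Proof.
elim/alg_ind: f.
- by move=> c; rewrite lpC hornerC mevalC.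
- by move=> i; rewrite lpX mevalXU hornerD hornerC hornerZ hornerX mulrC.
- by move=> p q Hp Hq; rewrite lpD hornerD Hp Hq mevalD.
- by move=> p q Hp Hq; rewrite lpM hornerM Hp Hq mevalM.
Qed.

Lemma lp_coef0 f a w : (lp f a w)`_0 = f.@[a].
Proof.
rewrite -horner_coef0 lpE; apply: meval_eq => i.
by rewrite mul0r addr0.
Qed.

Lemma lp_coef1 f a w :
  (lp f a w)`_1 = \sum_i w i * (f^`M(i)).@[a].
Proof.
elim/alg_ind: f.
- move=> c; rewrite lpC coefC /=; rewrite big1 // => i _.
  by rewrite mderivC meval0 mulr0.
- move=> i; rewrite lpX coefD coefC coefZ coefX /= add0r mulr1.
  rewrite (bigD1 i) //= big1 ?addr0.
    rewrite mderivX mnm1E eqxx /=.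
    have -> : (U_(i) - U_(i))%MM = 0%MM by apply/mnmP => j; rewrite mnmBE subnn mnm0E.
    by rewrite scale1r mpolyX0 meval1 mulr1.
  move=> j ji; rewrite mderivX mnm1E eq_sym (negbTE ji) /=.
  by rewrite scale0r meval0 mulr0.
- move=> p q Hp Hq; rewrite lpD coefD Hp Hq -big_split /=.
  by apply: eq_bigr => i _; rewrite mderivD mevalD mulrDr.
- move=> p q Hp Hq; rewrite lpM coefM big_ord_recr big_ord1 /=.
  rewrite !lp_coef0 Hp Hq mulr_sumr mulr_suml -big_split /=.
  apply: eq_bigr => i _; rewrite mderivM mevalD !mevalM; ring.
Qed.
End S.
Section P2.
Variable R : realType.
Implicit Types (P Q : {poly R}).

Lemma poly_eq0_itv P d : 0 < d -> (forall t, 0 < t <= d -> P.[t] = 0) -> P = 0.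
Proof.
move=> d0 H; apply/eqP/negPn/negP => P0.
pose rs := [seq d / (i.+1)%:R | i <- iota 0 (size P)].
have A : all (root P) rs.
  apply/allP => x /mapP [i _ ->]; apply/eqP/H.
  apply/andP; split; first by rewrite divr_gt0 ?ltr0Sn.
  rewrite ler_pdivrMr ?ltr0Sn //; have h : 1 <= (i.+1)%:R :> R by rewrite ler1n.
  nra.
have B : uniq rs.
  rewrite map_inj_uniq ?iota_uniq // => i j /eqP.
  rewrite eqr_div ?pnatr_eq0 // => /eqP /(mulfI (lt0r_neq0 d0)) /eqP.
  by rewrite eqr_nat eqSS eq_sym => /eqP.
by have := @max_poly_roots _ P rs P0 A B; rewrite size_map size_iota ltnn.
Qed.

Lemma poly_eq0_fun P : (forall t, P.[t] = 0) -> P = 0.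
Proof. by move=> H; apply: (@poly_eq0_itv _ 1) => // t _; apply: H. Qed.

Lemma coef_mul_top P Q d e : leq (size P) d.+1 -> leq (size Q) e.+1 ->
  leq (size (P * Q)) (d + e)%N.+1 /\ (P * Q)`_(d + e)%N = P`_d * Q`_e.
Proof.
move=> sP sQ; split.
  apply: leq_trans (size_polyMleq _ _) _; lia.
rewrite coefM (bigD1 (Ordinal (leq_addr e d.+1 : (d < (d + e).+1)%N))) //=.
rewrite addKn big1 ?addr0 // => j /eqP jd.
have [ltjd|ltdj|eqjd] := ltngtP j d.
- rewrite [Q`__]nth_default ?mulr0 //; apply: leq_trans sQ _.
  lia.
- by rewrite [P`__]nth_default ?mul0r //; apply: leq_trans sP _.
- by case: jd; apply: val_inj; rewrite /= eqjd.
Qed.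

Lemma prod_top (I : Type) (r : seq I) (F : I -> {poly R}) (D : I -> nat) :
  (forall i, leq (size (F i)) (D i).+1) ->
  leq (size (\prod_(i <- r) F i)) (\sum_(i <- r) D i)%N.+1 /\
  (\prod_(i <- r) F i)`_(\sum_(i <- r) D i)%N = \prod_(i <- r) (F i)`_(D i).
Proof.
move=> HF; elim: r => [|i r [IH1 IH2]].
  by rewrite !big_nil size_poly1 coefC.
rewrite !big_cons; have [-> ->] := coef_mul_top (HF i) IH1.
by rewrite IH2.
Qed.

Lemma exp_top P d k : leq (size P) d.+1 ->
  leq (size (P ^+ k)) (d * k)%N.+1 /\ (P ^+ k)`_(d * k)%N = P`_d ^+ k.
Proof.
move=> HP; elim: k => [|k [IH1 IH2]].
  by rewrite !expr0 muln0 size_poly1 coefC.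
rewrite !exprS mulnS; have [-> ->] := coef_mul_top HP IH1.
by rewrite IH2.
Qed.

Lemma cubic_eq0 (c0 c1 c2 c3 : R) :
  (forall t, c0 + c1 * t + c2 * t ^+ 2 + c3 * t ^+ 3 = 0) ->
  [/\ c0 = 0, c1 = 0, c2 = 0 & c3 = 0].
Proof.
move=> H; have h0 := H 0; have h1 := H 1; have h2 := H (-1); have h3 := H 2.
have h4 := H (-2).
rewrite !expr2 !exprS !expr0 in h0 h1 h2 h3 h4.
rewrite !mulr0 !mulr1 !addr0 in h0.
split; lra.
Qed.

Lemma poly_cubic P t : leq (size P) 4 ->
  P.[t] = P`_0 + P`_1 * t + P`_2 * t ^+ 2 + P`_3 * t ^+ 3.
Proof.
move=> sP; rewrite (horner_coef_wide _ sP) !big_ord_recr big_ord0 /=.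
by rewrite add0r expr0 mulr1 expr1.
Qed.

End P2.
Section P3.
Variable R : realType.
Variable n : nat.
Implicit Types (f g p q : {mpoly R[n]}) (a w x y : 'I_n -> R).

Lemma lp_homog3 f a w : f \is 3.-homog ->
  leq (size (lp f a w)) 4 /\ (lp f a w)`_3 = f.@[w].
Proof.
move=> /dhomogP hf.
set h := fun i => (a i)%:P + w i *: 'X.
have hs i : leq (size (h i)) 2.
  rewrite /h; apply: leq_trans (size_polyD _ _) _.
  rewrite geq_max (leq_trans (size_polyC_leq1 _)) //=; apply: leq_trans (size_scale_leq _ _) _.
  by rewrite size_polyX.
have hc i : (h i)`_1 = w i by rewrite /h coefD coefC coefZ coefX /= add0r mulr1.
have Hm m : m \in msupp f ->
   leq (size ((f@_m)%:P * mmap1 h m)) 4 /\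
   ((f@_m)%:P * mmap1 h m)`_3 = f@_m * \prod_i w i ^+ m i.
  move=> mf; have dm : (\sum_i m i)%N = 3%N by rewrite -(mdegE m) hf.
  have [s1 c1] := @prod_top R _ (index_enum 'I_n) (fun i => h i ^+ m i) (fun i => m i)
     (fun i => let: conj A _ := exp_top (m i) (hs i) in eq_ind _ (fun k => leq _ k.+1) A _ (mul1n _)).
  rewrite /mmap1; split.
    apply: leq_trans (size_polyMleq _ _) _.
    have := size_polyC_leq1 (f@_m); move: s1; rewrite dm.
    move: (size (\prod_(i <- index_enum 'I_n) h i ^+ m i)) => k s1 s2.
    lia.
  rewrite coefCM; congr (_ * _); move: c1; rewrite dm => ->.
  apply: eq_bigr => i _; have [_ e] := exp_top (m i) (hs i).
  by rewrite mul1n in e; rewrite e hc.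
have Hs (s : seq 'X_{1..n}) : {subset s <= msupp f} ->
   leq (size (\sum_(m <- s) (f@_m)%:P * mmap1 h m)) 4 /\
   (\sum_(m <- s) (f@_m)%:P * mmap1 h m)`_3 = \sum_(m <- s) f@_m * \prod_i w i ^+ m i.
  elim: s => [|m s IH] H; first by rewrite !big_nil size_poly0 coef0.
  have [s1 c1] := Hm m (H m (mem_head _ _)).
  have [s2 c2] : _ /\ _ := IH (fun z zs => H z ltac:(by rewrite inE zs orbT)).
  rewrite !big_cons coefD c1 c2; split => //.
  by apply: leq_trans (size_polyD _ _) _; rewrite geq_max s1 s2.
rewrite /lp /mmap -/h mevalE; exact: Hs.
Qed.
End P3.
Section P4.
Variable R : realType.
Variable n : nat.
Implicit Types (f g p q : {mpoly R[n]}) (a w x y : 'I_n -> R).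

Definition lin f a w := \sum_i w i * (f^`M(i)).@[a].

Lemma line3 f a w t : f \is 3.-homog ->
  f.@[fun i => a i + t * w i] =
  f.@[a] + lin f a w * t + (lp f a w)`_2 * t ^+ 2 + f.@[w] * t ^+ 3.
Proof.
move=> hf; have [s c] := lp_homog3 a w hf.
by rewrite -lpE (poly_cubic _ s) c lp_coef0 lp_coef1.
Qed.

Lemma mcoeff0_eval p : p@_0 = p.@[fun _ => 0].
Proof.
elim/alg_ind: p.
- by move=> c; rewrite mcoeffC eqxx mulr1 mevalC.
- move=> i; rewrite mevalXU mcoeffX.
  by case: eqP => // /mnmP /(_ i); rewrite mnm1E eqxx mnm0E.
- by move=> p q Hp Hq; rewrite mcoeffD mevalD Hp Hq.
- by move=> p q Hp Hq; rewrite (mcoeff0_is_multiplicative _ _).1 mevalM Hp Hq.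
Qed.

Definition dvec (i : 'I_n) : 'I_n -> R := fun j => (i == j)%:R.

Lemma lin_dvec f a i : lin f a (dvec i) = (f^`M(i)).@[a].
Proof.
rewrite /lin (bigD1 i) //= big1 ?addr0 /dvec ?eqxx ?mul1r // => j ji.
by rewrite eq_sym (negbTE ji) mul0r.
Qed.

Lemma fun0_deriv p : (forall x, p.@[x] = 0) -> forall i x, (p^`M(i)).@[x] = 0.
Proof.
move=> H i x; rewrite -lin_dvec /lin -lp_coef1.
suff -> : lp p x (dvec i) = 0 by rewrite coef0.
by apply: poly_eq0_fun => t; rewrite lpE H.
Qed.

Lemma mpoly_fun0 p : (forall x, p.@[x] = 0) -> p = 0.
Proof.
move=> H; apply/mpolyP => m; rewrite mcoeff0.
have [k] := ubnP (mdeg m); elim: k p m H => // k IH p m H.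
rewrite ltnS leq_eqVlt => /orP [/eqP dm|]; last exact: IH.
case: (pickP (fun i => 0 < m i)%N) => [i mi | H0].
  pose m' := (m - U_(i))%MM.
  have em : m = (m' + U_(i))%MM.
    apply/mnmP => j; rewrite mnmDE mnmBE mnm1E.
    by case: (i =P j) => [<-|_]; [rewrite subnK|rewrite subn0 addn0].
  have dm' : (mdeg m' < k)%N by move: dm; rewrite em mdegD mdeg1 addn1 => <-.
  have := IH (p^`M(i)) m' (fun x => fun0_deriv H i x) dm'.
  rewrite mcoeff_mderiv -em => /eqP; rewrite mulrn_eq0 /= => /eqP //.
have m0 : m = 0%MM by apply/mnmP => j; rewrite mnm0E; move: (H0 j) => /=; case: (m j).
by rewrite m0 mcoeff0_eval H.
Qed.

End P4.
Definition cub (R : realType) (c0 c1 c2 c3 t : R) :=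
  c0 + c1 * t + c2 * t ^+ 2 + c3 * t ^+ 3.

Section P5.
Variable R : realType.

Lemma cub_Poly (c0 c1 c2 c3 t : R) : (Poly [:: c0; c1; c2; c3]).[t] = cub c0 c1 c2 c3 t.
Proof.
by rewrite (@poly_cubic R (Poly [:: c0; c1; c2; c3]) t (size_Poly _)) !coef_Poly.
Qed.

Lemma cub_roots (c0 c1 c2 c3 : R) (s : seq R) : uniq s -> size s = 4%N ->
  (forall t, t \in s -> cub c0 c1 c2 c3 t = 0) -> forall t, cub c0 c1 c2 c3 t = 0.
Proof.
move=> us ss H t; rewrite -cub_Poly.
have [->|P0] := eqVneq (Poly [:: c0; c1; c2; c3]) 0; first by rewrite horner0.
have := @max_poly_roots _ _ s P0.
have -> : all (root (Poly [:: c0; c1; c2; c3])) s.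
  by apply/allP => x xs; rewrite /root cub_Poly H.
rewrite us ss => /(_ isT isT) h.
by have := leq_trans h (size_Poly _).
Qed.

Lemma cub_itv (c0 c1 c2 c3 d : R) : 0 < d ->
  (forall t, 0 < t <= d -> cub c0 c1 c2 c3 t = 0) -> forall t, cub c0 c1 c2 c3 t = 0.
Proof.
move=> d0 H t; rewrite -cub_Poly.
suff -> : Poly [:: c0; c1; c2; c3] = 0 by rewrite horner0.
by apply: (poly_eq0_itv d0) => x hx; rewrite cub_Poly H.
Qed.

Lemma cub_eq (c0 c1 c2 c3 d0 d1 d2 d3 : R) :
  (forall t, cub c0 c1 c2 c3 t = cub d0 d1 d2 d3 t) ->
  [/\ c0 = d0, c1 = d1, c2 = d2 & c3 = d3].
Proof.
move=> H; have [] := @cubic_eq0 R (c0 - d0) (c1 - d1) (c2 - d2) (c3 - d3).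
  move=> t; transitivity (cub c0 c1 c2 c3 t - cub d0 d1 d2 d3 t).
    by rewrite /cub; ring.
  by rewrite H subrr.
by move=> h0 h1 h2 h3; split; lra.
Qed.

Lemma sign_persist (P : {poly R}) : P.[0] != 0 ->
  exists2 d, 0 < d & forall e, `|e| < d -> 0 < P.[e] * P.[0].
Proof.
move=> P0; have n0 : 0 < `|P.[0]| by rewrite normr_gt0.
have [d d0 Hd] := poly_cont 0 P n0.
exists d => // e he; have := Hd e; rewrite subr0 => /(_ he).
have [p0|p0] := ltrP 0 P.[0].
  rewrite (gtr0_norm p0) ltr_norml => /andP [h1 h2]; nra.
rewrite (ler0_norm p0) ltr_norml => /andP [h1 h2].
have p0' : P.[0] < 0 by rewrite lt_neqAle P0 p0.
nra.
Qed.

End P5.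
Lemma sign_trans (R : realType) (A B C : R) : A * B < 0 -> 0 < C * B -> A * C < 0.
Proof.
move=> h1 h2; have B0 : B != 0 by apply/eqP => B0; rewrite B0 mulr0 ltxx in h1.
have Bsq : 0 < B * B by rewrite -expr2 exprn_even_gt0.
have : (A * B) * (C * B) < 0 by rewrite pmulr_llt0.
have -> : (A * B) * (C * B) = (A * C) * (B * B) by ring.
by rewrite pmulr_llt0.
Qed.

Section P6.
Variable R : realType.
Variable n : nat.
Variable f : {mpoly R[n]}.
Hypothesis hf : f \is 3.-homog.
Variable g : ('I_n -> R) -> R.
Hypothesis gline : forall a w, exists c0 c1 c2 c3, forall t,
  g (fun i => a i + t * w i) = cub c0 c1 c2 c3 t.
Hypothesis hz : forall x, f.@[x] = 0 -> g x = 0.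
Implicit Types (a b w x y : 'I_n -> R).

Definition pt a w (t : R) := fun i => a i + t * w i.

Lemma fline a w t : f.@[pt a w t] = cub f.@[a] (lin f a w) (lp f a w)`_2 f.@[w] t.
Proof. by rewrite /pt line3. Qed.

Lemma pt0 a w : pt a w 0 = a.
Proof. by apply: functional_extensionality => i; rewrite /pt mul0r addr0. Qed.

Lemma good_line a b t1 t2 t3 : f.@[a] != 0 -> uniq [:: t1; t2; t3] ->
  f.@[pt a b t1] = 0 -> f.@[pt a b t2] = 0 -> f.@[pt a b t3] = 0 ->
  forall t, g (pt a b t) = g a / f.@[a] * f.@[pt a b t].
Proof.
move=> fa u r1 r2 r3 t.
have [c0 [c1 [c2 [c3 gl]]]] := gline a b.
set k := g a / f.@[a].
have E s : g (pt a b s) - k * f.@[pt a b s] =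
   cub (c0 - k * f.@[a]) (c1 - k * lin f a b) (c2 - k * (lp f a b)`_2) (c3 - k * f.@[b]) s.
  by rewrite gl fline /cub; ring.
apply/eqP; rewrite -subr_eq0; apply/eqP; rewrite E.
apply: (@cub_roots _ _ _ _ _ [:: 0; t1; t2; t3]) => //.
- have nz s : f.@[pt a b s] = 0 -> s != 0.
    by move=> h; apply/eqP => s0; move: h; rewrite s0 pt0 => /eqP; rewrite (negbTE fa).
  rewrite [uniq _]/= !inE !negb_or !(eq_sym 0) (nz _ r1) (nz _ r2) (nz _ r3) /=.
  by move: u; rewrite /= !inE !negb_or andbT => /andP [-> ->].
- move=> s; rewrite !inE => /or4P [] /eqP ->; rewrite -E.
  + by rewrite pt0 /k mulrVK ?unitfE // subrr.
  + by rewrite r1 hz // mulr0 subrr.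
  + by rewrite r2 hz // mulr0 subrr.
  + by rewrite r3 hz // mulr0 subrr.
Qed.

Definition Good a b := exists t1 t2 t3, [/\ 0 < t1, t1 < t2, t2 < t3,
  f.@[a] * f.@[pt a b t1] < 0 &
  f.@[pt a b t1] * f.@[pt a b t2] < 0 /\ f.@[pt a b t2] * f.@[pt a b t3] < 0].

Lemma good_line2 a b : Good a b ->
  f.@[a] != 0 /\ forall t, g (pt a b t) = g a / f.@[a] * f.@[pt a b t].
Proof.
move=> [t1 [t2 [t3 [h1 h2 h3 s1 [s2 s3]]]]].
have fa : f.@[a] != 0 by apply/eqP => e; rewrite e mul0r ltxx in s1.
split => //.
have root_in (u v : R) : u < v -> f.@[pt a b u] * f.@[pt a b v] < 0 ->
    exists2 r, u < r < v & f.@[pt a b r] = 0.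
  move=> uv; rewrite -!lpE => /(poly_ivtoo (ltW uv)) [r]; rewrite in_itv /= => hr /eqP.
  by rewrite lpE => hr'; exists r.
have s1' : f.@[pt a b 0] * f.@[pt a b t1] < 0 by rewrite pt0.
have [r1 /andP [r1a r1b] e1] := root_in _ _ h1 s1'.
have [r2 /andP [r2a r2b] e2] := root_in _ _ h2 s2.
have [r3 /andP [r3a r3b] e3] := root_in _ _ h3 s3.
apply: (good_line fa _ e1 e2 e3).
rewrite /= !inE; apply/and3P; split => //.
  by apply/norP; split; rewrite lt_eqF //; [lra | lra].
by rewrite lt_eqF //; lra.
Qed.

Lemma good_all a b : Good a b -> forall x, g x = g a / f.@[a] * f.@[x].
Proof.
move=> G x; have [fa _] := good_line2 G.
move: (G) => [t1 [t2 [t3 [h1 h2 h3 s1 [s2 s3]]]]].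
set k := g a / f.@[a].
pose d := fun i => x i - a i - b i.
pose P (t : R) := lp f (pt a b t) (fun i => t * d i).
have PE t e : (P t).[e] = f.@[pt a (pt b d e) t].
  by rewrite lpE; apply: meval_eq => i; rewrite /pt; ring.
have P0 t : (P t).[0] = f.@[pt a b t] by rewrite PE pt0.
have nz1 : (P t1).[0] != 0 by rewrite P0; apply/eqP => e; rewrite e mulr0 ltxx in s1.
have nz2 : (P t2).[0] != 0 by rewrite P0; apply/eqP => e; rewrite e mulr0 ltxx in s2.
have nz3 : (P t3).[0] != 0 by rewrite P0; apply/eqP => e; rewrite e mulr0 ltxx in s3.
have [d1 d1p H1] := sign_persist nz1.
have [d2 d2p H2] := sign_persist nz2.
have [d3 d3p H3] := sign_persist nz3.
pose dl := Num.min d1 (Num.min d2 d3).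
have dlp : 0 < dl by rewrite !lt_min d1p d2p d3p.
have key e : 0 < e -> e < dl ->
    g (pt a (pt b d e) 1) = k * f.@[pt a (pt b d e) 1].
  move=> e0; rewrite !lt_min => /and3P [ed1 ed2 ed3].
  have ea : `|e| = e by rewrite gtr0_norm.
  have q1 := H1 e; have q2 := H2 e; have q3 := H3 e.
  rewrite ea !P0 !PE in q1 q2 q3.
  have {}q1 := q1 ed1; have {}q2 := q2 ed2; have {}q3 := q3 ed3.
  have G' : Good a (pt b d e).
    exists t1, t2, t3; split => //; first exact: sign_trans s1 q1.
    split.
      have h := sign_trans s2 q2; rewrite mulrC in h.
      by rewrite mulrC; apply: sign_trans h q1.
    have h := sign_trans s3 q3; rewrite mulrC in h.
    by rewrite mulrC; apply: sign_trans h q2.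
  by have [_ ->] := good_line2 G'.
have [c0 [c1 [c2 [c3 gl]]]] := gline (pt a b 1) d.
have ptE e : pt a (pt b d e) 1 = pt (pt a b 1) d e.
  by apply: functional_extensionality => i; rewrite /pt; ring.
have E e : g (pt (pt a b 1) d e) - k * f.@[pt (pt a b 1) d e] =
   cub (c0 - k * f.@[pt a b 1]) (c1 - k * lin f (pt a b 1) d)
       (c2 - k * (lp f (pt a b 1) d)`_2) (c3 - k * f.@[d]) e.
  by rewrite gl fline /cub; ring.
have Z : forall e, cub (c0 - k * f.@[pt a b 1]) (c1 - k * lin f (pt a b 1) d)
       (c2 - k * (lp f (pt a b 1) d)`_2) (c3 - k * f.@[d]) e = 0.
  have dl2 : 0 < dl / 2 by rewrite divr_gt0.
  apply: (cub_itv dl2) => e /andP [e0 e1].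
  rewrite -E -ptE key ?subrr //; lra.
have X1 : pt (pt a b 1) d 1 = x.
  by apply: functional_extensionality => i; rewrite /pt /d; ring.
by apply/eqP; rewrite -subr_eq0 -X1 E Z.
Qed.

End P6.
Section P7.
Variable R : realType.
Variable n : nat.
Variable f : {mpoly R[n]}.
Hypothesis hf : f \is 3.-homog.
Implicit Types (a b p u v w x y : 'I_n -> R).

Lemma lin_pt p y u e : lin f p (pt y u e) = lin f p y + e * lin f p u.
Proof.
rewrite /lin /pt mulr_sumr -big_split /=; apply: eq_bigr => i _; ring.
Qed.

Lemma lin_scale p u k : lin f p (fun i => k * u i) = k * lin f p u.
Proof. by rewrite /lin mulr_sumr; apply: eq_bigr => i _; rewrite mulrA. Qed.

Lemma fpt_pt a w r s : f.@[pt (pt a w r) w s] = f.@[pt a w (r + s)].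
Proof. by apply: meval_eq => i; rewrite /pt; ring. Qed.

Lemma H_lemma p u : f.@[p] = 0 -> lin f p u != 0 ->
  (exists v, lin f p v * f.@[v] < 0) \/ (forall y, lin f p y = 0 -> f.@[y] = 0).
Proof.
move=> fp lu; case: (classic (exists v, lin f p v * f.@[v] < 0)) => [h|h]; [by left|right].
move=> y ly; apply/eqP/negPn/negP => fy.
pose k := - (lin f p u * f.@[y]).
pose u2 := fun i => k * u i.
have y0 : (lp f y u2).[0] != 0 by rewrite horner_coef0 lp_coef0.
have [dd ddp Hd] := sign_persist y0.
have e0 : 0 < dd / 2 by rewrite divr_gt0.
have := Hd (dd / 2); rewrite gtr0_norm // horner_coef0 lp_coef0 lpE.
have -> : dd / 2 < dd by lra.
move=> /(_ isT) hv; apply: h; exists (pt y u2 (dd / 2)).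
rewrite lin_pt ly lin_scale /k add0r.
set V := f.@[_] in hv; set L := lin f p u; set Y := f.@[y]; set e := dd / 2.
have L2 : 0 < L * L by rewrite -expr2 exprn_even_gt0.
have -> : e * (- (L * Y) * L) * V = - (e * (L * L)) * (V * Y) by ring.
rewrite mulNr oppr_lt0; apply: mulr_gt0 => //; exact: mulr_gt0.
Qed.

Lemma GM_lemma p v (m M gam : R) : m < 0 -> 0 < M -> gam != 0 ->
  (forall s, f.@[pt p v s] = gam * (s * (s - m) * (s - M))) ->
  Good f (pt p v (2 * m)) v.
Proof.
move=> m0 M0 g0 F.
have G s : f.@[pt (pt p v (2 * m)) v s] = gam * ((2 * m + s) * (2 * m + s - m) * (2 * m + s - M)).
  by rewrite fpt_pt F.
have gg : 0 < gam * gam by rewrite -expr2 exprn_even_gt0.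
have prod (x y : R) : x < 0 -> 0 < y -> gam * x * (gam * y) < 0.
  move=> hx hy; have -> : gam * x * (gam * y) = (gam * gam) * (x * y) by ring.
  by rewrite pmulr_rlt0 // nmulr_rlt0.
have prod' (x y : R) : 0 < x -> y < 0 -> gam * x * (gam * y) < 0.
  move=> hx hy; have -> : gam * x * (gam * y) = (gam * gam) * (x * y) by ring.
  by rewrite pmulr_rlt0 // pmulr_rlt0.
exists (- (3 / 2) * m), (M / 2 - 2 * m), (2 * M - 2 * m); split; try lra.
- rewrite F G; apply: prod.
    have h1 : 0 < 2 * m * (2 * m - m) by nra.
    rewrite pmulr_rlt0 //; lra.
  have -> : 2 * m + - (3 / 2) * m = m / 2 by field.
  have h1 : m / 2 * (m / 2 - m) < 0 by nra.
  rewrite nmulr_rgt0 //; lra.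
split; rewrite !G.
- apply: prod'.
    have -> : 2 * m + - (3 / 2) * m = m / 2 by field.
    have h1 : m / 2 * (m / 2 - m) < 0 by nra.
    rewrite nmulr_rgt0 //; lra.
  have -> : 2 * m + (M / 2 - 2 * m) = M / 2 by field.
  have h1 : 0 < M / 2 * (M / 2 - m) by nra.
  rewrite pmulr_rlt0 //; lra.
- apply: prod.
    have -> : 2 * m + (M / 2 - 2 * m) = M / 2 by field.
    have h1 : 0 < M / 2 * (M / 2 - m) by nra.
    rewrite pmulr_rlt0 //; lra.
  have -> : 2 * m + (2 * M - 2 * m) = 2 * M by ring.
  have h1 : 0 < 2 * M * (2 * M - m) by nra.
  rewrite pmulr_rgt0 //; lra.
Qed.

Lemma G_lemma p v : f.@[p] = 0 -> lin f p v * f.@[v] < 0 ->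
  exists a, Good f a v.
Proof.
move=> fp hlv.
set al := lin f p v in hlv; set ga := f.@[v] in hlv; set be := (lp f p v)`_2.
have g0 : ga != 0 by apply/eqP => e; rewrite e mulr0 ltxx in hlv.
have FL s : f.@[pt p v s] = al * s + be * s ^+ 2 + ga * s ^+ 3.
  by rewrite fline // fp /cub add0r.
set D := be ^+ 2 - 4 * al * ga.
have D0 : 0 <= D.
  rewrite /D subr_ge0; apply: le_trans (sqr_ge0 be).
  have -> : 4 * al * ga = 4 * (al * ga) by ring.
  by rewrite pmulr_rle0 ?ltW.
set sq := Num.sqrt D.
have sq2 : sq ^+ 2 = D by rewrite sqr_sqrtr.
set r1 := (- be - sq) / (2 * ga).
set r2 := (- be + sq) / (2 * ga).
have hs : r1 + r2 = - be / ga by rewrite /r1 /r2; field; rewrite g0.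
have hp : r1 * r2 = al / ga.
  transitivity ((be ^+ 2 - sq ^+ 2) / (4 * ga ^+ 2)).
    by rewrite /r1 /r2; field; rewrite g0.
  by rewrite sq2 /D; field; rewrite g0.
have Fac s : f.@[pt p v s] = ga * (s * (s - r1) * (s - r2)).
  rewrite FL.
  have -> : ga * (s * (s - r1) * (s - r2)) = ga * (s ^+ 3 - (r1 + r2) * s ^+ 2 + (r1 * r2) * s)
    by ring.
  by rewrite hs hp; field; rewrite g0.
have neg : r1 * r2 < 0.
  rewrite hp; have -> : al / ga = (al * ga) / (ga * ga) by field; rewrite g0.
  by rewrite pmulr_llt0 // invr_gt0 -expr2 exprn_even_gt0.
have [h1|h1] := ltrP r1 0.
  have h2 : 0 < r2 by nra.
  by exists (pt p v (2 * r1)); apply: (GM_lemma h1 h2 g0).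
have h2 : r2 < 0 by nra.
have h1' : 0 < r1 by nra.
exists (pt p v (2 * r2)); apply: (GM_lemma h2 h1' g0) => s.
by rewrite Fac; ring.
Qed.

Lemma S_lemma a : f.@[a] != 0 ->
  (exists p u, f.@[p] = 0 /\ lin f p u != 0) \/
  (lin f a a != 0 /\ forall y, lin f a y = 0 -> f.@[y] = 0).
Proof.
move=> fa.
case: (classic (exists p u, f.@[p] = 0 /\ lin f p u != 0)) => [h|h]; [by left|right].
have Hs p u : f.@[p] = 0 -> lin f p u = 0.
  by move=> fp; apply/eqP/negPn/negP => ne; apply: h; exists p, u.
have claim w : f.@[w] != 0 ->
    3 * lin f a w * f.@[w] = ((lp f a w)`_2) ^+ 2 /\
    27 * f.@[a] * f.@[w] ^+ 2 = ((lp f a w)`_2) ^+ 3.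
  move=> fw; have [s3 c3] := lp_homog3 a w hf.
  have sz : size (lp f a w) = 4%N.
    apply/eqP; rewrite eqn_leq s3 /=; rewrite ltnNge; apply/negP => hs.
    by move: fw; rewrite -c3 nth_default // eqxx.
  have [r hr] : {r | root (lp f a w) r} by apply: odd_poly_root; rewrite sz.
  set ga := f.@[w] in fw *.
  pose q := pt a w r.
  have fp : f.@[q] = 0 by move: hr; rewrite /root lpE => /eqP.
  have lp0 := Hs q w fp.
  set be := (lp f q w)`_2.
  have FLp s : f.@[pt q w s] = cub 0 0 be ga s by rewrite fline // fp lp0.
  have [be0|be0] := eqVneq be 0.
    have E t : cub f.@[a] (lin f a w) (lp f a w)`_2 ga t =
               cub (- ga * r ^+ 3) (3 * ga * r ^+ 2) (- 3 * ga * r) ga t.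
      have -> : cub f.@[a] (lin f a w) (lp f a w)`_2 ga t = f.@[pt q w (t - r)].
        by rewrite fpt_pt -fline // addrC subrK.
      by rewrite FLp be0 /cub; ring.
    have [-> -> -> _] := cub_eq E.
    by split; ring.
  exfalso.
  set s0 := - be / ga.
  pose q' := pt q w s0.
  have fq' : f.@[q'] = 0 by rewrite FLp /cub /s0; field; rewrite fw.
  have lp0' := Hs q' w fq'.
  have E t : cub f.@[q'] (lin f q' w) (lp f q' w)`_2 ga t =
             cub (be * s0 ^+ 2 + ga * s0 ^+ 3) (2 * be * s0 + 3 * ga * s0 ^+ 2)
                 (be + 3 * ga * s0) ga t.
    by rewrite -fline // fpt_pt FLp /cub; ring.
  have [_ e1 _ _] := cub_eq E.
  move: e1; rewrite lp0' /s0 => e1.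
  have : be * be / ga = 0.
    by rewrite e1; field; rewrite fw.
  move/eqP; rewrite mulf_eq0 invr_eq0 (negbTE fw) orbF mulf_eq0 orbb.
  by rewrite (negbTE be0).
split.
  apply/eqP => la; have [c1 c2] := claim a fa.
  move: c1; rewrite la mulr0 mul0r => /esym /eqP; rewrite expf_eq0 /= => /eqP b0.
  move: c2; rewrite b0 expr0n /= => /eqP; apply/negP.
  by rewrite !mulf_neq0 ?expf_neq0 ?pnatr_eq0.
move=> y ly; apply/eqP/negPn/negP => fy; have [c1 c2] := claim y fy.
move: c1; rewrite ly mulr0 mul0r => /esym /eqP; rewrite expf_eq0 /= => /eqP b0.
move: c2; rewrite b0 expr0n /= => /eqP; apply/negP.
by rewrite !mulf_neq0 ?expf_neq0 ?pnatr_eq0.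
Qed.

End P7.
Section P8.
Variable R : realType.
Variable n : nat.
Implicit Types (a b p u v w x y : 'I_n -> R).

Lemma C3 (f : {mpoly R[n]}) a : f \is 3.-homog -> f.@[a] != 0 ->
  (exists a' b, Good f a' b) \/
  (exists p u, lin f p u != 0 /\ forall y, lin f p y = 0 -> f.@[y] = 0).
Proof.
move=> hf fa; case: (S_lemma hf fa) => [[p [u [fp lu]]] | [la H]].
  case: (H_lemma fp lu) => [[v hv]|Hy]; last by right; exists p, u.
  by have [a' G] := G_lemma hf fp hv; left; exists a', v.
by right; exists a, a.
Qed.

Lemma LF (f : {mpoly R[n]}) (c : 'I_n -> R) (k : 'I_n) :
  f \is 3.-homog -> irreducible_mpoly f -> c k != 0 ->
  (forall y, \sum_i y i * c i = 0 -> f.@[y] = 0) -> False.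
Proof.
move=> hf [f0 fu firr] ck Hy.
pose L : {mpoly R[n]} := \sum_i c i *: 'X_i.
have LE y : L.@[y] = \sum_i y i * c i.
  rewrite /L raddf_sum /=; apply: eq_bigr => i _.
  by rewrite mevalZ mevalXU mulrC.
pose sg := [tuple (if i == k then 'X_k - (c k)^-1 *: L else 'X_i) | i < n].
have sX i : 'X_i \mPo sg = if i == k then 'X_k - (c k)^-1 *: L else 'X_i.
  by rewrite comp_mpolyXU -tnth_nth tnth_mktuple.
have Id h : exists q, h - (h \mPo sg) = L * q.
  elim/alg_ind: h.
  - by move=> e; exists 0; rewrite comp_mpolyC subrr mulr0.
  - move=> i; rewrite sX; case: eqP => [->|_]; last by exists 0; rewrite subrr mulr0.
    by exists (c k)^-1%:MP; rewrite mulrC mul_mpolyC; ring.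
  - move=> p q [q1 e1] [q2 e2]; exists (q1 + q2).
    by rewrite raddfD /= mulrDr -e1 -e2; ring.
  - move=> p q [q1 e1] [q2 e2]; exists (q1 * q + (p \mPo sg) * q2).
    have -> : p * q - ((p * q) \mPo sg) = (p - (p \mPo sg)) * q + (p \mPo sg) * (q - (q \mPo sg)).
      by rewrite rmorphM /=; ring.
    by rewrite e1 e2; ring.
have r0 : f \mPo sg = 0.
  apply: mpoly_fun0 => y; rewrite comp_mpoly_meval; apply: Hy.
  have -> : \sum_i (tnth sg i).@[y] * c i =
            \sum_i y i * c i - (c k)^-1 * L.@[y] * c k.
    rewrite (bigD1 k) //= [in RHS](bigD1 k) //= tnth_mktuple eqxx.
    rewrite mevalB mevalZ mevalXU.
    have -> : \sum_(i < n | i != k) (tnth sg i).@[y] * c i =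
              \sum_(i < n | i != k) y i * c i.
      apply: eq_bigr => i ik; rewrite tnth_mktuple (negbTE ik) mevalXU //.
    ring.
  by rewrite LE mulrAC mulVf // mul1r subrr.
have [q fq] := Id f; rewrite r0 subr0 in fq.
case: (firr _ _ fq) => /unitrP [z [z1 z2]].
  have := congr1 (meval (fun _ => 0)) z1.
  rewrite mevalM meval1 LE big1 ?mulr0 => [|i _]; last by rewrite mul0r.
  by move/eqP; rewrite eq_sym oner_eq0.
have q0 : q != 0 by apply/eqP => e; move: z1; rewrite e mulr0 => /eqP; rewrite eq_sym oner_eq0.
have z0 : z != 0 by apply/eqP => e; move: z1; rewrite e mul0r => /eqP; rewrite eq_sym oner_eq0.
have hs := congr1 (mmeasure mdeg) z1; rewrite msizeM // msize1 in hs.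
have hz : mmeasure mdeg z != 0%N by rewrite msize_poly_eq0.
have qc : q = (q@_0)%:MP.
  apply: msize1_polyC; move: hs hz; case: (mmeasure mdeg z) => [|a] // hs _.
  by rewrite addSn /= in hs; rewrite -hs leq_addl.
have L1 : L \is 1.-homog.
  rewrite /L; apply: rpred_sum => i _; apply: dhomogZ.
  by rewrite dhomogX; apply/eqP; apply: mdeg1.
have f1 : f \is 1.-homog by rewrite fq qc mulrC mul_mpolyC dhomogZ.
by have := dhomog_uniq f0 hf f1.
Qed.

End P8.
Section P9.
Variable R : realType.
Variable n : nat.

Lemma exists_nz (f : {mpoly R[n]}) : f != 0 -> exists a, f.@[a] != 0.
Proof.
move=> f0; case: (classic (exists a, f.@[a] != 0)) => // h.
exfalso; move/eqP: f0; apply; apply: mpoly_fun0 => x.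
by apply/eqP/negPn/negP => hx; apply: h; exists x.
Qed.

Lemma core (f : {mpoly R[n]}) (g : ('I_n -> R) -> R) :
  f \is 3.-homog -> irreducible_mpoly f ->
  (forall a w, exists c0 c1 c2 c3, forall t,
     g (fun i => a i + t * w i) = cub c0 c1 c2 c3 t) ->
  (forall x, f.@[x] = 0 -> g x = 0) ->
  exists c, forall x, g x = c * f.@[x].
Proof.
move=> hf firr gl hz; have [f0 _ _] := firr.
have [a fa] := exists_nz f0.
case: (C3 hf fa) => [[a' [b G]] | [p [u [lu Hy]]]].
  by exists (g a' / f.@[a']); apply: (good_all hf gl hz G).
exfalso.
have [k ck] : exists k, (f^`M(k)).@[p] != 0.
  case: (classic (exists k, (f^`M(k)).@[p] != 0)) => // h.
  move: lu; rewrite /lin big1 ?eqxx // => i _.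
  have -> : (f^`M(i)).@[p] = 0.
    by apply/eqP/negPn/negP => hi; apply: h; exists i.
  by rewrite mulr0.
exact: (LF hf firr ck Hy).
Qed.

End P9.

Unset Implicit Arguments.
Unset Strict Implicit.

Theorem proposition1 (R : realType) (n : nat) (f1 f2 : {mpoly R[n]}) :
  f1 \is 3.-homog -> f2 \is 3.-homog ->
  irreducible_mpoly f1 -> irreducible_mpoly f2 ->
  (congruent_poly f1 f2 <-> congruent_cone (zero_cone f1) (zero_cone f2)).
Proof.
move=> h1 h2 i1 i2; split.
  move=> [U [c [oU c0 H]]]; exists U; split => // y; split.
    move=> Fy; exists (U^T *m y); split; last by rewrite mulmxA oU mul1mx.
    by rewrite /zero_cone H mulmxA oU mul1mx Fy mulr0.
  move=> [x [Fx ->]]; move: Fx; rewrite /zero_cone H => /eqP.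
  by rewrite mulf_eq0 (negbTE c0) => /eqP.
move=> [U [oU H]].
pose g := fun v : 'I_n -> R => f2.@[fun i => \sum_j U i j * v j].
have gE x : evalv f2 (U *m x) = g (fun i => x i 0).
  by apply: meval_eq => i; rewrite mxE.
have fE (v : 'I_n -> R) : evalv f1 (\col_i v i) = f1.@[v].
  by apply: meval_eq => i; rewrite mxE.
have gl a w : exists c0 c1 c2 c3, forall t,
    g (fun i => a i + t * w i) = cub c0 c1 c2 c3 t.
  pose Ua := fun i => \sum_j U i j * a j.
  pose Uw := fun i => \sum_j U i j * w j.
  exists f2.@[Ua], (lin f2 Ua Uw), (lp f2 Ua Uw)`_2, f2.@[Uw] => t.
  rewrite -(fline h2); apply: meval_eq => i; rewrite /pt /Ua /Uw mulr_sumr -big_split /=.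
  by apply: eq_bigr => j _; ring.
have hz x : f1.@[x] = 0 -> g x = 0.
  move=> fx; have : zero_cone f1 (\col_i x i) by rewrite /zero_cone fE.
  move=> F1; have /H F2 : exists x0, zero_cone f1 x0 /\ U *m \col_i x i = U *m x0.
    by exists (\col_i x i).
  by move: F2; rewrite /zero_cone gE; congr (g _ = 0); apply: functional_extensionality => i; rewrite mxE.
have [c Hc] := core h1 i1 gl hz.
have [f10 _ _] := i1.
have [a fa] := exists_nz f10.
have c0 : c != 0.
  apply/eqP => ce.
  have : zero_cone f2 (U *m \col_i a i).
    rewrite /zero_cone gE Hc ce mul0r //.
  move=> /H [x [Fx ex]].
  have ex' : \col_i a i = x.
    have oU' := mulmx1C oU.
    by rewrite -[LHS]mul1mx -oU' -mulmxA ex mulmxA oU' mul1mx.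
  by move: Fx; rewrite /zero_cone -ex' fE => /eqP; rewrite (negbTE fa).
exists U, c^-1; split; [done | by rewrite invr_eq0 | move=> x].
rewrite gE Hc mulrA mulVf // mul1r.
by rewrite -fE; congr (evalv f1 _); apply/matrixP => i j; rewrite !mxE ord1.
Qed.
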